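(* Let $p$ be a prime, $C\subseteq\mathbb{F}_p^{2n}$ a symplectic self-orthogonal code with stabilizer code $Q(C)\subseteq\mathbb{C}^{p^n}$, and $J\subsetneq\{1,\dots,n\}$. Let $\overline J=\{1,\dots,n\}\setminus J$, let $|\varphi\rangle\in Q(C)$ and $\sigma=\mathrm{tr}_{\overline J}[|\varphi\rangle\langle\varphi|]$. Let $Q(\sigma_J(C))\subseteq\mathbb{C}^{p^{|J|}}$ be the stabilizer code defined by the shortened code $\sigma_J(C)$, with the character chosen so that for every $\mathbf z\in\sigma_J(C)$ and the vector $\mathbf y\in C$ with $\pi_J(\mathbf y)=\mathbf z$ and zero coordinates outside $J$, $\lambda(E_{\mathbf z})=\lambda(E_{\mathbf y})$. Then the column space of $\sigma$ satisfies $\mathrm{col}(\sigma)\subseteq Q(\sigma_J(C))$.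
   Context: Vectors of $\mathbb{F}_p^{2m}$ are written $(\mathbf a|\mathbf b)$, $\mathbf a,\mathbf b\in\mathbb F_p^m$, with coordinate pairs $(a_j,b_j)$ indexed by a set of size $m$. The symplectic form is $(\mathbf a|\mathbf b)\cdot_s(\mathbf c|\mathbf d)=\mathbf a\cdot\mathbf d-\mathbf b\cdot\mathbf c$; $C^{\perp_s}$ is the dual, and $C$ is symplectic self-orthogonal if $C\subseteq C^{\perp_s}$. For $R\subseteq\{1,\dots,n\}$, $\pi_R(\mathbf a|\mathbf b)=(a_j|b_j)_{j\in R}$ and $\sigma_R(D)=\{\pi_R(\mathbf y):\mathbf y=(\mathbf a|\mathbf b)\in D,\ \mathrm{supp}(\mathbf a)\cup\mathrm{supp}(\mathbf b)\subseteq R\}$. Let $\xi=e^{2\pi\iota/p}$, $X(a)|x\rangle=|x+a\rangle$, $Z(b)|x\rangle=\xi^{bx}|x\rangle$ on $\mathbb C^p$, and $E_{(\mathbf a,\mathbf b)}=\bigotimes_j X(a_j)Z(b_j)$. For a symplectic self-orthogonal code $D\subseteq\mathbb F_p^{2m}$, the stabilizer code $Q(D)\subseteq\mathbb C^{p^m}$ is the common eigenspace $\{v:Ev=\lambda(E)v\ \forall E\in S\}$, where $S$ is the commutative group generated by scalars $\xi^\ell\mathcal I$ and the $E_{\mathbf y}$, $\mathbf y\in D$, and $\lambda$ is a character of $S$ with $\lambda(\xi\mathcal I)=\xi$. $\mathrm{tr}_{\overline J}$ is the partial trace over the qudits indexed by $\overline J$. *)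

(* Defs.v *)
From HB Require Import structures.
From mathcomp Require Import all_boot all_order all_algebra all_field.
Set Implicit Arguments. Unset Strict Implicit. Unset Printing Implicit Defensive.
Import GRing.Theory Num.Theory.
Local Open Scope ring_scope.

(* qudit index set I (a finite type); basis labels x in F_p^I *)
Definition lab (p : nat) (I : finType) := {ffun I -> 'F_p}.
Definition pvec (p : nat) (I : finType) := (lab p I * lab p I)%type.
(* dimension p^|I| of (C^p)^{\otimes I}; basis vector |x> has index enum_rank x *)
Definition dim (p : nat) (I : finType) := #|{: lab p I}|.
Definition op (p : nat) (I : finType) := 'M[algC]_(dim p I).
Definition ket (p : nat) (I : finType) := 'cV[algC]_(dim p I).

Definition dotp (p : nat) (I : finType) (a b : lab p I) : 'F_p := \sum_i a i * b i.
Definition symp (p : nat) (I : finType) (y z : pvec p I) : 'F_p :=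
  dotp y.1 z.2 - dotp y.2 z.1.

Definition is_code (p : nat) (I : finType) (C : {set pvec p I}) : Prop :=
  [/\ ([ffun=> 0], [ffun=> 0]) \in C,
      (forall y z, y \in C -> z \in C ->
         ([ffun i => y.1 i + z.1 i], [ffun i => y.2 i + z.2 i]) \in C) &
      (forall (c : 'F_p) y, y \in C -> ([ffun i => c * y.1 i], [ffun i => c * y.2 i]) \in C)].

Definition symp_self_orth (p : nat) (I : finType) (C : {set pvec p I}) : Prop :=
  forall y z, y \in C -> z \in C -> symp y z = 0.

(* E_(a,b) = (x) X(a_j) Z(b_j) : |x> |-> xi^{b.x} |x + a> *)
Definition pauliE (p : nat) (I : finType) (xi : algC) (y : pvec p I) : op p I :=
  \matrix_(r, c)
    ((((enum_val r : lab p I) == [ffun i => (enum_val c : lab p I) i + y.1 i]) %:R : algC)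
      * xi ^+ (nat_of_ord (dotp y.2 (enum_val c : lab p I)))).

(* S = group generated by scalars xi^l I and the E_y, y in D;
   its elements are exactly the xi^l E_y *)
Definition inS (p : nat) (I : finType) (xi : algC) (D : {set pvec p I}) (M : op p I) : Prop :=
  exists (l : nat) (y : pvec p I), y \in D /\ M = xi ^+ l *: pauliE xi y.

Definition is_char (p : nat) (I : finType) (xi : algC) (D : {set pvec p I})
    (lam : op p I -> algC) : Prop :=
  (forall M N, inS xi D M -> inS xi D N -> lam (M *m N) = lam M * lam N) /\
  lam (xi%:M) = xi.

Definition in_stabcode (p : nat) (I : finType) (xi : algC) (D : {set pvec p I})
    (lam : op p I -> algC) (v : ket p I) : Prop :=
  forall M, inS xi D M -> M *m v = lam M *: v.

Definition subJ (n : nat) (J : {set 'I_n}) := {i : 'I_n | i \in J}.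

Definition restrict (p n : nat) (J : {set 'I_n}) (x : lab p 'I_n) : lab p (subJ J) :=
  [ffun i => x (val i)].

Definition projJ (p n : nat) (J : {set 'I_n}) (y : pvec p 'I_n) : pvec p (subJ J) :=
  (restrict J y.1, restrict J y.2).

Definition supp_in (p n : nat) (J : {set 'I_n}) (y : pvec p 'I_n) : bool :=
  [forall i, (i \notin J) ==> (y.1 i == 0) && (y.2 i == 0)].

Definition shortened (p n : nat) (J : {set 'I_n}) (D : {set pvec p 'I_n}) : {set pvec p (subJ J)} :=
  [set projJ J y | y in [set y in D | supp_in J y]].

Definition ptrace (p n : nat) (J : {set 'I_n}) (rho : op p 'I_n) : op p (subJ J) :=
  \matrix_(r, c)
    \sum_(x : lab p 'I_n) \sum_(x' : lab p 'I_n |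
        [&& restrict J x == (enum_val r : lab p (subJ J)),
            restrict J x' == (enum_val c : lab p (subJ J)) &
            [forall i, (i \notin J) ==> (x i == x' i)]])
      rho (enum_rank x) (enum_rank x').

Definition ketbra (p n : nat) (phi : ket p 'I_n) : op p 'I_n :=
  phi *m (map_mx Num.conj phi)^T.

(* Main.v *)
Require Import Defs.
From HB Require Import structures.
From mathcomp Require Import all_boot all_order all_algebra all_field.
Import GRing.Theory Num.Theory.
Set Implicit Arguments. Unset Strict Implicit.
Local Open Scope ring_scope.

Definition subl (p : nat) (I : finType) (x a : lab p I) : lab p I := [ffun i => x i - a i].
Definition addl (p : nat) (I : finType) (x a : lab p I) : lab p I := [ffun i => x i + a i].

Lemma pauliE_mulE p (I : finType) (xi : algC) (y : pvec p I) m
   (A : 'M[algC]_(Defs.dim p I, m)) (x : lab p I) j :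
  (pauliE xi y *m A) (enum_rank x) j =
  xi ^+ (nat_of_ord (dotp y.2 (subl x y.1))) * A (enum_rank (subl x y.1)) j.
Proof.
rewrite mxE (bigD1 (enum_rank (subl x y.1))) //= big1 ?addr0.
  rewrite !mxE !enum_rankK.
  have -> : x == [ffun i => subl x y.1 i + y.1 i].
    by apply/eqP/ffunP => i; rewrite !ffunE subrK.
  by rewrite mul1r.
move=> k Hk; rewrite !mxE.
case: eqP => [Ex|]; last by rewrite !mul0r.
exfalso; move/eqP: Hk; apply; rewrite -(enum_valK k); congr enum_rank.
by apply/ffunP => i; rewrite enum_rankK in Ex; rewrite Ex !ffunE addrK.
Qed.

Lemma dotp_restrict p n (J : {set 'I_n}) (b x : lab p 'I_n) :
  (forall i, i \notin J -> b i = 0) -> dotp (restrict J b) (restrict J x) = dotp b x.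
Proof.
move=> H; rewrite /dotp (bigID (fun i => i \in J)) /= [X in _ + X]big1 ?addr0; last first.
  by move=> i /H ->; rewrite mul0r.
rewrite (big_sub (mem J)); apply: eq_bigr => i _; rewrite !ffunE //.
Qed.

Lemma ketbraE p n (phi : ket p 'I_n) i j :
  ketbra phi i j = phi i ord0 * (phi j ord0)^*.
Proof. by rewrite /ketbra mxE big_ord1 !mxE. Qed.

Lemma core p n (xi : algC) (J : {set 'I_n}) (y : pvec p 'I_n) (phi : ket p 'I_n) (c0 : algC) :
  supp_in J y -> pauliE xi y *m phi = c0 *: phi ->
  pauliE xi (projJ J y) *m ptrace J (ketbra phi) = c0 *: ptrace J (ketbra phi).
Proof.
move=> /forallP Hs Hphi.
have H1 : forall i, i \notin J -> y.1 i = 0.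
  by move=> i /(implyP (Hs i)) /andP [/eqP].
have H2 : forall i, i \notin J -> y.2 i = 0.
  by move=> i /(implyP (Hs i)) /andP [_ /eqP].
have Hph : forall x, c0 * phi (enum_rank x) ord0 =
   xi ^+ (nat_of_ord (dotp y.2 (subl x y.1))) * phi (enum_rank (subl x y.1)) ord0.
  by move=> x; rewrite -pauliE_mulE Hphi mxE.
apply/matrixP => r c; rewrite -(enum_valK r); set u := enum_val r.
rewrite pauliE_mulE !mxE !enum_rankK mulr_sumr [in RHS]mulr_sumr.
rewrite [in RHS](reindex_inj (h := fun x0 => addl x0 y.1)) /=; last first.
  move=> a b /ffunP E; apply/ffunP => i; move: (E i); rewrite !ffunE.
  by move/(congr1 (fun t => t - y.1 i)); rewrite !addrK.
apply: eq_bigr => x0 _; rewrite !mulr_sumr.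
apply: eq_big => [x'|x' Hc].
  congr [&& _, _ & _].
    apply/eqP/eqP => [E|E]; apply/ffunP => i.
      by move/ffunP: E => /(_ i); rewrite !ffunE => ->; rewrite subrK.
    by move/ffunP: E => /(_ i); rewrite !ffunE => <-; rewrite addrK.
  apply: eq_forallb => i; case: (boolP (i \in J)) => //= Hi.
  by rewrite !ffunE H1 // addr0.
rewrite !ketbraE [RHS]mulrA Hph.
have -> : subl (addl x0 y.1) y.1 = x0 by apply/ffunP => i; rewrite !ffunE addrK.
case/and3P: Hc => /eqP Hc _ _.
by rewrite /= -Hc dotp_restrict // mulrA.
Qed.

Lemma pauliE0 p (I : finType) (xi : algC) :
  pauliE xi (([ffun=> 0], [ffun=> 0]) : pvec p I) = 1%:M.
Proof.
apply/matrixP => r c; rewrite !mxE.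
have -> : dotp ([ffun=> 0] : lab p I) (enum_val c) = 0.
  by rewrite /dotp big1 // => i _; rewrite ffunE mul0r.
rewrite expr0 mulr1.
have -> : [ffun i => (enum_val c : lab p I) i + ([ffun=> 0] : lab p I) i] = enum_val c.
  by apply/ffunP => i; rewrite !ffunE addr0.
by rewrite (inj_eq enum_val_inj).
Qed.

Theorem proposition12 (p n : nat) (xi : algC) (C : {set pvec p 'I_n})
    (lam : op p 'I_n -> algC) (J : {set 'I_n}) (lamJ : op p (subJ J) -> algC)
    (phi : ket p 'I_n) :
  prime p -> p.-primitive_root xi ->
  is_code C -> symp_self_orth C -> is_char xi C lam ->
  J \proper [set: 'I_n] ->
  in_stabcode xi C lam phi ->
  is_char xi (shortened J C) lamJ ->
  (forall y, y \in C -> supp_in J y ->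
     lamJ (pauliE xi (projJ J y)) = lam (pauliE xi y)) ->
  forall w : ket p (subJ J),
    in_stabcode xi (shortened J C) lamJ (ptrace J (ketbra phi) *m w).
Proof.
move=> _ _ [C0 _ _] _ _ _ Hphi [HmulJ HxiJ] Hlam w M [l [z [Hz ->]]].
rewrite mulmxA.
suff -> : xi ^+ l *: pauliE xi z *m ptrace J (ketbra phi) =
   lamJ (xi ^+ l *: pauliE xi z) *: ptrace J (ketbra phi) by rewrite scalemxAl.
case/imsetP: Hz => y; rewrite inE => /andP [Cy Sy] ->.
have Ey : pauliE xi y *m phi = lam (pauliE xi y) *: phi.
  apply: Hphi.
  by exists 0%N, y; rewrite expr0 scale1r.
have Hy' : projJ J y \in shortened J C.
  by apply/imsetP; exists y; rewrite ?inE ?Cy.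
have Hz0 : (([ffun=> 0], [ffun=> 0]) : pvec p (subJ J)) \in shortened J C.
  apply/imsetP; exists ([ffun=> 0], [ffun=> 0]).
    rewrite inE C0 /=; apply/forallP => i; apply/implyP => _; by rewrite !ffunE eqxx.
  by congr pair; apply/ffunP => i; rewrite !ffunE.
have Hl : lamJ (xi ^+ l *: pauliE xi (projJ J y)) = xi ^+ l * lamJ (pauliE xi (projJ J y)).
  elim: l => [|l IH]; first by rewrite expr0 scale1r mul1r.
  rewrite exprS -scalerA -mul_scalar_mx HmulJ ?HxiJ ?IH ?mulrA //.
    by exists 1%N, ([ffun=> 0], [ffun=> 0]); rewrite pauliE0 expr1 scalemx1.
  by exists l, (projJ J y).
by rewrite Hl -scalemxAl (core Sy Ey) -scalerA Hlam.
Qed.
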